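(* Let $f:\mathbb{R}^n\to\mathbb{R}$ be continuously differentiable and bounded below with $\nabla f$ Lipschitz continuous with constant $L(f)$, let $s$ be an integer with $0<s<n$, and let $\{\mathbf{x}^k\}_{k\ge0}$ be a sequence generated by the IHT method with constant $L>L(f)$. Then any accumulation point of $\{\mathbf{x}^k\}_{k\ge0}$ is an $L$-stationary point of the problem (P): minimize $f(\mathbf{x})$ subject to $\|\mathbf{x}\|_0\le s$.
   Context: $C_s=\{\mathbf{x}\in\mathbb{R}^n:\|\mathbf{x}\|_0\le s\}$ where $\|\mathbf{x}\|_0$ is the number of nonzero components. $P_{C_s}(\mathbf{y})=\operatorname{argmin}_{\mathbf{x}\in C_s}\|\mathbf{x}-\mathbf{y}\|^2$ (possibly multi-valued). The IHT method with constant $L$: choose $\mathbf{x}^0\in C_s$ and for $k=0,1,2,\dots$ pick any $\mathbf{x}^{k+1}\in P_{C_s}\!\left(\mathbf{x}^k-\frac1L\nabla f(\mathbf{x}^k)\right)$. A point $\mathbf{x}^*\in C_s$ is $L$-stationary for (P) if $\mathbf{x}^*\in P_{C_s}\!\left(\mathbf{x}^*-\frac1L\nabla f(\mathbf{x}^* )\right)$. ''$\nabla f$ Lipschitz with constant $L(f)$'' means $\|\nabla f(\mathbf{x})-\nabla f(\mathbf{y})\|\le L(f)\|\mathbf{x}-\mathbf{y}\|$ for all $\mathbf{x},\mathbf{y}$. *)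

(* Defs.v *)
From mathcomp Require Import all_boot all_order all_algebra.
From mathcomp Require Import reals.
Set Implicit Arguments. Unset Strict Implicit. Unset Printing Implicit Defensive.
Import Order.TTheory GRing.Theory Num.Theory.
Local Open Scope ring_scope.

Section Defs.
Variables (R : realType) (n : nat).

Definition dotv (x y : 'rV[R]_n) : R := \sum_(i < n) x 0 i * y 0 i.
Definition sqnorm (x : 'rV[R]_n) : R := dotv x x.
Definition enorm (x : 'rV[R]_n) : R := Num.sqrt (sqnorm x).

Definition l0 (x : 'rV[R]_n) : nat := #|[set i : 'I_n | x 0 i != 0]|.

Definition inCs (s : nat) (x : 'rV[R]_n) : Prop := (l0 x <= s)%N.

Definition inPCs (s : nat) (y x : 'rV[R]_n) : Prop :=
  inCs s x /\ forall z, inCs s z -> sqnorm (x - y) <= sqnorm (z - y).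

Definition is_gradient (f : 'rV[R]_n -> R) (g : 'rV[R]_n -> 'rV[R]_n) : Prop :=
  forall x eps, 0 < eps -> exists2 delta, 0 < delta &
    forall y, enorm (y - x) < delta ->
      `|f y - f x - dotv (g x) (y - x)| <= eps * enorm (y - x).

Definition vcontinuous (g : 'rV[R]_n -> 'rV[R]_n) : Prop :=
  forall x eps, 0 < eps -> exists2 delta, 0 < delta &
    forall y, enorm (y - x) < delta -> enorm (g y - g x) < eps.

Definition lipschitz_with (Lf : R) (g : 'rV[R]_n -> 'rV[R]_n) : Prop :=
  forall x y, enorm (g x - g y) <= Lf * enorm (x - y).

Definition bounded_below (f : 'rV[R]_n -> R) : Prop :=
  exists m : R, forall x, m <= f x.

Definition IHT_seq (s : nat) (L : R) (g : 'rV[R]_n -> 'rV[R]_n)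
    (xs : nat -> 'rV[R]_n) : Prop :=
  inCs s (xs 0%N) /\
  forall k, inPCs s (xs k - L^-1 *: g (xs k)) (xs k.+1).

Definition vconverges (u : nat -> 'rV[R]_n) (l : 'rV[R]_n) : Prop :=
  forall eps, 0 < eps -> exists N, forall k, (N <= k)%N -> enorm (u k - l) < eps.

Definition accumulation_point (xs : nat -> 'rV[R]_n) (x : 'rV[R]_n) : Prop :=
  exists phi : nat -> nat, (forall j, (phi j < phi j.+1)%N) /\
    vconverges (fun j => xs (phi j)) x.

Definition L_stationary (s : nat) (L : R) (g : 'rV[R]_n -> 'rV[R]_n)
    (x : 'rV[R]_n) : Prop :=
  inCs s x /\ inPCs s (x - L^-1 *: g x) x.

End Defs.

(* Main.v *)
Require Import Defs.
From mathcomp Require Import all_boot all_order all_algebra.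
From mathcomp Require Import reals.
From mathcomp Require Import all_classical all_reals all_analysis.
From mathcomp Require Import ring lra.
Import Order.TTheory GRing.Theory Num.Theory.
Import numFieldNormedType.Exports.
Set Implicit Arguments. Unset Strict Implicit. Unset Printing Implicit Defensive.
Local Open Scope ring_scope.

Section Vec.
Variables (R : realType) (n : nat).
Implicit Types (x y z : 'rV[R]_n) (a : R).

Lemma dotvC x y : dotv x y = dotv y x.
Proof. by rewrite /dotv; apply: eq_bigr => i _; rewrite mulrC. Qed.

Lemma dotvDl x y z : dotv (x + y) z = dotv x z + dotv y z.
Proof. by rewrite /dotv -big_split; apply: eq_bigr => i _; rewrite mxE mulrDl. Qed.

Lemma dotvZl a x y : dotv (a *: x) y = a * dotv x y.
Proof. by rewrite /dotv mulr_sumr; apply: eq_bigr => i _; rewrite mxE mulrA. Qed.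

Lemma dotvNl x y : dotv (- x) y = - dotv x y.
Proof. by rewrite -scaleN1r dotvZl mulN1r. Qed.

Lemma dotvDr x y z : dotv z (x + y) = dotv z x + dotv z y.
Proof. by rewrite dotvC dotvDl !(dotvC z). Qed.

Lemma dotvZr a x y : dotv y (a *: x) = a * dotv y x.
Proof. by rewrite dotvC dotvZl dotvC. Qed.

Lemma dotvNr x y : dotv y (- x) = - dotv y x.
Proof. by rewrite dotvC dotvNl dotvC. Qed.

Lemma sqnorm_ge0 x : 0 <= sqnorm x.
Proof. by rewrite /sqnorm /dotv; apply: sumr_ge0 => i _; rewrite -expr2 sqr_ge0. Qed.

Lemma sqnormE x : sqnorm x = enorm x ^+ 2.
Proof. by rewrite /enorm sqr_sqrtr // sqnorm_ge0. Qed.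

Lemma enorm_ge0 x : 0 <= enorm x.
Proof. exact: sqrtr_ge0. Qed.

Lemma sqnormD x y : sqnorm (x + y) = sqnorm x + 2 * dotv x y + sqnorm y.
Proof. rewrite /sqnorm !dotvDl !dotvDr (dotvC y x); ring. Qed.

Lemma sqnormN x : sqnorm (- x) = sqnorm x.
Proof. by rewrite /sqnorm dotvNl dotvNr opprK. Qed.

Lemma sqnormZ a x : sqnorm (a *: x) = a ^+ 2 * sqnorm x.
Proof. rewrite /sqnorm dotvZl dotvZr; ring. Qed.

Lemma sqnorm0 : sqnorm (0 : 'rV[R]_n) = 0.
Proof. by rewrite -(scale0r (0 : 'rV[R]_n)) sqnormZ expr0n mul0r. Qed.

Lemma enormN x : enorm (- x) = enorm x.
Proof. by rewrite /enorm sqnormN. Qed.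

Lemma enormZ a x : enorm (a *: x) = `|a| * enorm x.
Proof. by rewrite /enorm sqnormZ sqrtrM ?sqr_ge0 // sqrtr_sqr. Qed.

Lemma sqnorm_eq0 x : sqnorm x = 0 -> x = 0.
Proof.
move=> H; apply/rowP => i; rewrite mxE.
have := @psumr_eq0P R _ predT (fun j => x 0 j * x 0 j) (fun j _ => sqr_ge0 _) H i isT.
  by move/eqP; rewrite mulf_eq0 orbb => /eqP.
Qed.

Lemma dotv0l y : dotv 0 y = 0.
Proof. by rewrite -(scale0r (0 : 'rV[R]_n)) dotvZl mul0r. Qed.

Lemma CS x y : dotv x y <= enorm x * enorm y.
Proof.
have [ex0|exP] := eqVneq (sqnorm x) 0.
  by move/sqnorm_eq0: ex0 => ->; rewrite dotv0l /enorm sqnorm0 sqrtr0 mul0r.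
have [ey0|eyP] := eqVneq (sqnorm y) 0.
  by move/sqnorm_eq0: ey0 => ->; rewrite dotvC dotv0l /enorm sqnorm0 sqrtr0 mulr0.
have hx : 0 < enorm x by rewrite /enorm sqrtr_gt0 lt_def exP sqnorm_ge0.
have hy : 0 < enorm y by rewrite /enorm sqrtr_gt0 lt_def eyP sqnorm_ge0.
have := sqnorm_ge0 ((enorm x)^-1 *: x - (enorm y)^-1 *: y).
rewrite sqnormD sqnormN !sqnormZ dotvZl dotvNr dotvZr !sqnormE.
set a := enorm x; set b := enorm y; set d := dotv x y => H.
have E : a^-1 ^+ 2 * a ^+ 2 + 2 * (a^-1 * - (b^-1 * d)) + b^-1 ^+ 2 * b ^+ 2
   = 2 - 2 * d / (a * b).
  by field; rewrite ?hx ?hy; apply/andP; split; apply: lt0r_neq0.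
rewrite E subr_ge0 ler_pdivrMr ?mulr_gt0 // in H.
lra.
Qed.

Lemma sqnormB_le x y : enorm (x + y) <= enorm x + enorm y.
Proof.
have h1 := enorm_ge0 (x + y); have h2 := enorm_ge0 x; have h3 := enorm_ge0 y.
have := sqnormD x y; rewrite !sqnormE => E.
have := CS x y => C.
have : enorm (x + y) ^+ 2 <= (enorm x + enorm y) ^+ 2 by rewrite E; nra.
by rewrite ler_pXn2r // nnegrE ?addr_ge0.
Qed.

End Vec.

Local Open Scope classical_set_scope.
Definition dhyp (R : realType) (phi : R -> R) (t D : R) :=
  forall eps : R, 0 < eps -> exists2 delta : R, 0 < delta &
     forall h : R, `|h| < delta -> `|phi (t + h) - phi t - h * D| <= eps * `|h|.

Arguments dhyp {R}.
Lemma dhyp_poly (R : realType) (phi : R -> R) (t D a b : R) :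
  dhyp phi t D ->
  dhyp (fun u => phi u - a * u - b * (u * u)) t (D - a - b * (2 * t)).
Proof.
move=> H e e0.
have [d d0 Hd] := H (e / 2) ltac:(by rewrite divr_gt0).
have b1 : 0 < `|b| + 1 by rewrite ltr_pwDr ?normr_ge0.
exists (Num.min d (e / (2 * (`|b| + 1)))).
  by rewrite lt_min d0 divr_gt0 // mulr_gt0.
move=> h; rewrite lt_min => /andP [hd hb].
have -> : phi (t + h) - a * (t + h) - b * ((t + h) * (t + h)) -
    (phi t - a * t - b * (t * t)) - h * (D - a - b * (2 * t)) =
    (phi (t + h) - phi t - h * D) - b * (h * h) by ring.
apply: le_trans (ler_normB _ _) _.
have := Hd h hd; rewrite !normrM => H1.
have hb' : `|h| * (2 * (`|b| + 1)) <= e.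
  by apply: ltW; rewrite -ltr_pdivlMr // mulr_gt0.
have h0 := normr_ge0 h; have bb := normr_ge0 b.
nra.
Qed.

Lemma bridge (R : realType) (phi : R -> R) (t D : R) :
  dhyp phi t D ->
  is_derive t 1 phi D.
Proof.
move=> H.
have C : (fun h : R => h^-1 *: ((phi \o shift t) (h *: 1) - phi t)) @ 0^' --> D.
  apply/cvgrPdist_le => e e0.
  have [d d0 Hd] := H e e0.
  near=> h.
  have hn0 : h != 0 by near: h; exact: nbhs_dnbhs_neq.
  have hd : `|h| < d by near: h; exact: dnbhs0_lt.
  rewrite /= /shift; have -> : h%:A + t = t + h by rewrite [h%:A]mulr1 addrC.
  have E : D - h^-1 *: (phi (t + h) - phi t) = - (h^-1 * (phi (t + h) - phi t - h * D)).
    by rewrite /GRing.scale /=; field.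
  rewrite E normrN normrM normfV ler_pdivrMl ?normr_gt0 // mulrC.
  by rewrite mulrC [`|h| * _]mulrC; exact: Hd.
by apply: DeriveDef; [apply/cvg_ex; exists D | apply: cvg_lim].
Unshelve. all: by end_near.
Qed.

Section Desc.
Variables (R : realType) (n : nat).
Lemma descent (f : 'rV[R]_n -> R) g Lf x d :
  is_gradient f g -> lipschitz_with Lf g ->
  f (x + d) <= f x + dotv (g x) d + Lf / 2 * sqnorm d.
Proof.
move=> Hg HL.
set a := dotv (g x) d; set b := Lf / 2 * sqnorm d.
pose phi := fun u : R => f (x + u *: d).
have ed0 := enorm_ge0 d.
have Dphi t : dhyp phi t (dotv (g (x + t *: d)) d).
  move=> e e0.
  have ed1 : 0 < enorm d + 1 by lra.
  have [del del0 Hdel] := Hg (x + t *: d) (e / (enorm d + 1)) (divr_gt0 e0 ed1).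
  exists (del / (enorm d + 1)); first exact: divr_gt0.
  move=> h hh.
  have E1 : x + (t + h) *: d - (x + t *: d) = h *: d.
    by rewrite scalerDl addrA [_ + h *: d]addrC addrK.
  have h0 := normr_ge0 h.
  have hn : enorm (h *: d) < del.
    rewrite enormZ; rewrite ltr_pdivlMr // in hh; nra.
  have := Hdel (x + (t + h) *: d); rewrite E1 => /(_ hn).
  rewrite dotvZr enormZ /phi => H1; apply: le_trans H1 _.
  set q := e / (enorm d + 1).
  have qe : q * (enorm d + 1) = e by rewrite /q divfK // gt_eqF.
  have q0 : 0 < q by rewrite divr_gt0.
  nra.
pose psi := fun u => phi u - a * u - b * (u * u).
have Dpsi (t : R) : is_derive t 1 psi (dotv (g (x + t *: d)) d - a - b * (2 * t)).
  exact/bridge/dhyp_poly.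
have cont : {within `[0, 1], continuous psi}.
  by apply: derivable_within_continuous => t _; case: (Dpsi t).
have [c c01 Hc] := MVT_segment ler01 (fun (t : R) _ => Dpsi t) cont.
have c0 : 0 <= c by move: c01; rewrite in_itv /= => /andP [].
have K : dotv (g (x + c *: d)) d - a <= b * (2 * c).
  have -> : dotv (g (x + c *: d)) d - a = dotv (g (x + c *: d) - g x) d.
    by rewrite dotvDl dotvNl.
  apply: le_trans (CS _ _) _.
  have := HL (x + c *: d) x; rewrite [x + _ - _]addrC addKr enormZ ger0_norm //.
  have := enorm_ge0 (g (x + c *: d) - g x).
  rewrite /b sqnormE; nra.
move: Hc; rewrite /psi /phi scale1r scale0r addr0 !mulr1 !mulr0 subr0.
lra.
Qed.
End Desc.
From Stdlib Require Import Classical.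
Local Close Scope classical_set_scope.

Section Main.
Variables (R : realType) (n : nat).
Implicit Types (x y z : 'rV[R]_n).

Lemma enorm_tri3 x y z : enorm (x - y) <= enorm (x - z) + enorm (z - y).
Proof. by have := sqnormB_le (x - z) (z - y); rewrite addrA subrK. Qed.

Lemma enormB_sym x y : enorm (x - y) = enorm (y - x).
Proof. by rewrite -opprB enormN. Qed.

Lemma comp_le x (i : 'I_n) : `|x 0 i| <= enorm x.
Proof.
have H : x 0 i ^+ 2 <= sqnorm x.
  rewrite /sqnorm /dotv (bigD1 i) //= -expr2 lerDl.
  by apply: sumr_ge0 => j _; rewrite -expr2 sqr_ge0.
rewrite sqnormE -(real_normK (num_real (x 0 i))) in H.
by rewrite -(ler_pXn2r (n := 2)) // nnegrE ?normr_ge0 ?enorm_ge0.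
Qed.

Lemma sq_of_enorm x y : enorm x <= enorm y -> sqnorm x <= sqnorm y.
Proof.
move=> H; rewrite !sqnormE; have := enorm_ge0 x; nra.
Qed.

Lemma enorm_of_sq x y : sqnorm x <= sqnorm y -> enorm x <= enorm y.
Proof. by move=> H; rewrite /enorm ler_sqrt // sqnorm_ge0. Qed.

End Main.

Theorem theorem3p1 (R : realType) (n s : nat)
  (f : 'rV[R]_n -> R) (g : 'rV[R]_n -> 'rV[R]_n) (Lf L : R)
  (xs : nat -> 'rV[R]_n) :
  is_gradient f g -> vcontinuous g -> bounded_below f ->
  lipschitz_with Lf g ->
  (0 < s)%N -> (s < n)%N ->
  Lf < L ->
  IHT_seq s L g xs ->
  forall xstar, accumulation_point xs xstar -> L_stationary s L g xstar.
Proof.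
move=> Hg _ [m0 Hm0] HL s0 sn LfL [H0 Hstep] xstar [phi [phimono conv]].
have Lf0 : 0 <= Lf.
  pose v : 'rV[R]_n := const_mx 1.
  have sv : sqnorm v = n%:R.
    rewrite /sqnorm /dotv.
    under eq_bigr do rewrite mxE mulr1.
    by rewrite sumr_const card_ord.
  have ev : 0 < enorm v.
    by rewrite /enorm sv sqrtr_gt0 ltr0n (leq_ltn_trans _ sn).
  have := HL v 0; rewrite subr0.
  have := enorm_ge0 (g v - g 0); nra.
have L0 : 0 < L by lra.
have inC k : inCs s (xs k) by case: k => [|k] //; case: (Hstep k).
set c := (L - Lf) / 2.
have c0 : 0 < c by rewrite /c; lra.
have dec k : f (xs k.+1) <= f (xs k) - c * sqnorm (xs k.+1 - xs k).
  have [_ Hp] := Hstep k.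
  have := Hp (xs k) (inC k).
  set w := L^-1 *: g (xs k).
  have -> : xs k.+1 - (xs k - w) = (xs k.+1 - xs k) + w by rewrite opprD opprK addrA.
  have -> : xs k - (xs k - w) = w by rewrite opprB addrC subrK.
  rewrite sqnormD /w dotvZr => H1.
  have := descent (xs k) (xs k.+1 - xs k) Hg HL.
  rewrite addrC subrK.
  set S := sqnorm (xs k.+1 - xs k); set D := dotv (xs k.+1 - xs k) (g (xs k)).
  rewrite dotvC -/D.
  have hS : 0 <= S by apply: sqnorm_ge0.
  have E : D = L * (L^-1 * D) by rewrite mulrA divff ?gt_eqF // mul1r.
  move: H1; rewrite -/S; set D' := L^-1 * D => H1 H2.
  have H3 : 0 <= L * (- (S + 2 * D')) by apply: mulr_ge0; lra.
  have H4 : D <= - (L / 2) * S.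
    rewrite E -/D'; lra.
  rewrite /c; lra.
have mono N k : (N <= k)%N -> f (xs k) <= f (xs N).
  move=> /subnK <-; elim: (k - N)%N => [|j IH]; first by rewrite add0n.
  rewrite addSn; apply: le_trans (dec _) _.
  have := sqnorm_ge0 (xs (j + N).+1 - xs (j + N)); nra.
have small eta : 0 < eta -> exists N, forall k, (N <= k)%N ->
    sqnorm (xs k.+1 - xs k) < eta.
  move=> eta0; apply: NNPP => Hn.
  have Hk N : exists k, (N <= k)%N /\ eta <= sqnorm (xs k.+1 - xs k).
    have [k Hk] := not_all_ex_not _ _ (not_ex_all_not _ _ Hn N).
    have [Nk Hk'] := imply_to_and _ _ Hk.
    by exists k; split => //; rewrite leNgt; apply/negP.
  have big m : exists N, f (xs N) <= f (xs 0) - m%:R * c * eta.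
    elim: m => [|m [N HN]]; first by exists 0%N; rewrite mul0r mul0r subr0.
    have [k [Nk Hk']] := Hk N.
    exists k.+1; apply: le_trans (dec k) _.
    have := mono N k Nk; rewrite -natr1; nra.
  have [N HN] := big (Num.truncn ((f (xs 0) - m0) / (c * eta))).+1.
  have := truncnS_gt ((f (xs 0) - m0) / (c * eta)).
  rewrite ltr_pdivrMr; last exact: mulr_gt0.
  move=> H.
  have := Hm0 (xs N); nra.
have smallE e : 0 < e -> exists N, forall k, (N <= k)%N ->
    enorm (xs k.+1 - xs k) < e.
  move=> e0; have [N HN] := small (e * e) (mulr_gt0 e0 e0).
  exists N => k /HN; rewrite sqnormE => H.
  rewrite ltNge; apply/negP => H'; have := enorm_ge0 (xs k.+1 - xs k); nra.
have phij j : (j <= phi j)%N.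
  by elim: j => // j IH; apply: leq_ltn_trans IH (phimono j).
have conv1 : vconverges (fun j => xs (phi j).+1) xstar.
  move=> e e0.
  have [N1 H1] := conv (e / 2) ltac:(by rewrite divr_gt0).
  have [N2 H2] := smallE (e / 2) ltac:(by rewrite divr_gt0).
  exists (maxn N1 N2) => k; rewrite geq_max => /andP [k1 k2] /=.
  apply: le_lt_trans (enorm_tri3 _ _ (xs (phi k))) _.
  have := H1 k k1; have := H2 (phi k) (leq_trans k2 (phij k)) => /=; lra.
have inCx : inCs s xstar.
  pose ep (i : 'I_n) := if xstar 0 i == 0 then 1 else `|xstar 0 i|.
  have ep0 i : 0 < ep i.
    by rewrite /ep; case: eqP => [//|/eqP h]; rewrite normr_gt0.
  have [Nf HNf] : exists Nf : 'I_n -> nat, forall i k, (Nf i <= k)%N ->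
      enorm (xs (phi k) - xstar) < ep i.
    apply: (@fin_all_exists _ (fun _ => nat) (fun i Ni => forall k, (Ni <= k)%N -> enorm (xs (phi k) - xstar) < ep i)) => i.
    exact: conv.
  pose N := \max_(i < n) Nf i.
  have sub : [set i | xstar 0 i != 0] \subset [set i | xs (phi N) 0 i != 0].
    apply/fintype.subsetP => i; rewrite !inE => nz; apply/negP => /eqP z0.
    have := HNf i N (leq_bigmax i); rewrite /ep (negbTE nz).
    have := comp_le (xs (phi N) - xstar) i; rewrite !mxE z0 sub0r normrN.
    lra.
  apply: leq_trans (subset_leq_card sub) _; exact: inC.
split => //; split => // z zC.
set ys := xstar - L^-1 *: g xstar.
apply: sq_of_enorm; apply/ler_addgt0Pr => e e0.
set K := 1 + Lf / L.
have K0 : 0 < K by rewrite /K; have := divr_ge0 Lf0 (ltW L0); lra.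
have [N1 H1] := conv (e / 3 / K) ltac:(by rewrite !divr_gt0).
have [N2 H2] := conv1 (e / 3) ltac:(by rewrite !divr_gt0).
pose j := maxn N1 N2.
have j1 : (N1 <= j)%N by rewrite leq_maxl.
have j2 : (N2 <= j)%N by rewrite leq_maxr.
set xk := xs (phi j); set x1 := xs (phi j).+1.
set yk := xk - L^-1 *: g xk.
have Hy : enorm (yk - ys) <= K * enorm (xk - xstar).
  have -> : yk - ys = (xk - xstar) + - (L^-1 *: (g xk - g xstar)).
    by apply/rowP => i; rewrite /yk /ys !mxE; ring.
  apply: le_trans (sqnormB_le _ _) _.
  have iL : 0 < L^-1 by rewrite invr_gt0.
  rewrite enormN enormZ ger0_norm; last exact: ltW.
  have := HL xk xstar; rewrite /K mulrDl mul1r.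
  have -> : Lf / L * enorm (xk - xstar) = L^-1 * (Lf * enorm (xk - xstar)) by ring.
  nra.
have Hproj : enorm (x1 - yk) <= enorm (z - yk).
  by apply: enorm_of_sq; have [_ Hp] := Hstep (phi j); exact: Hp.
have A1 := H1 j j1; have A2 := H2 j j2.
have B1 := enorm_tri3 xstar ys x1.
have B2 := enorm_tri3 x1 ys yk.
have B3 := enorm_tri3 z yk ys.
rewrite enormB_sym in A2.
rewrite (enormB_sym ys yk) in B3.
have : K * enorm (xk - xstar) < e / 3.
  by rewrite mulrC -ltr_pdivlMr.
lra.
Qed.
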